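(* Let $i=1$ if $\Phi$ is of type $\mathsf{E}_6$ and $i=7$ if $\Phi$ is of type $\mathsf{E}_7$, and let $W_i$ be the subgroup of the Weyl group $W$ generated by $S\setminus\{s_i\}$. Then for every $\alpha\in\Phi$, the reflection $s_\alpha$ lies in $W_i\cup W_is_iW_i$.
   Context: Bourbaki labelling of simple roots $\alpha_1,\dots,\alpha_n$, $s_j$ the simple reflection in $\alpha_j$, $S=\{s_1,\dots,s_n\}$, and $s_\alpha$ the reflection in the root $\alpha$. *)

(* Defs.v *)
(* Concrete model of the root systems E6, E7 in the basis of
   simple roots (Bourbaki labelling), with the Weyl group acting on the root
   lattice Z^n (column vectors of coefficients w.r.t. alpha_1..alpha_n). *)
From HB Require Import structures.
From mathcomp Require Import all_boot all_order all_algebra.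
Set Implicit Arguments. Unset Strict Implicit. Unset Printing Implicit Defensive.
Import GRing.Theory Num.Theory.
Local Open Scope ring_scope.

Inductive Etype := E6 | E7.

Definition rank (t : Etype) : nat := match t with E6 => 6 | E7 => 7 end.

(* Edges of the Dynkin diagram, Bourbaki labelling, shifted to 0-based indices:
   E6 : 1-3, 3-4, 4-5, 5-6, 2-4 ;  E7 : additionally 6-7. *)
Definition dynkin_edges (t : Etype) : seq (nat * nat) :=
  let e6 := [:: (0, 2); (2, 3); (3, 4); (4, 5); (1, 3)]%N in
  match t with E6 => e6 | E7 => rcons e6 (5, 6)%N end.

Definition adjacent (t : Etype) (a b : nat) : bool :=
  ((a, b) \in dynkin_edges t) || ((b, a) \in dynkin_edges t).

Definition cartan (t : Etype) : 'M[int]_(rank t) :=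
  \matrix_(a, b) (if a == b then 2%:Z else if adjacent t a b then -1 else 0).

Definition simple_root (t : Etype) (j : 'I_(rank t)) : 'cV[int]_(rank t) :=
  delta_mx j 0.

(* Reflection in a root alpha (all roots have (alpha,alpha) = 2 in the simply
   laced case, so alpha^vee pairing is the form itself):
   s_alpha(v) = v - (alpha, v) alpha, where (u, v) = u^T C v. *)
Definition refl (t : Etype) (a : 'cV[int]_(rank t)) : 'M[int]_(rank t) :=
  1%:M - a *m (a^T *m cartan t).

Definition sref (t : Etype) (j : 'I_(rank t)) : 'M[int]_(rank t) :=
  refl (simple_root j).

(* Subgroup of GL generated by the simple reflections s_j with P j.
   Since the generators are involutions, it is the set of finite products. *)
Inductive gen_by (t : Etype) (P : 'I_(rank t) -> bool) : 'M[int]_(rank t) -> Prop :=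
  | gen_one : gen_by P 1%:M
  | gen_mul j g : P j -> gen_by P g -> gen_by P (sref j *m g).

Definition weyl (t : Etype) (w : 'M[int]_(rank t)) : Prop := gen_by (fun _ => true) w.

Definition is_root (t : Etype) (a : 'cV[int]_(rank t)) : Prop :=
  exists w j, weyl w /\ a = w *m simple_root j.

(* the distinguished index: i = 1 for E6, i = 7 for E7 (0-based: 0 and 6) *)
Definition special_index (t : Etype) : 'I_(rank t) :=
  match t return 'I_(rank t) with
  | E6 => @Ordinal 6 0 isT
  | E7 => @Ordinal 7 6 isT
  end.

Definition Wi (t : Etype) (w : 'M[int]_(rank t)) : Prop :=
  gen_by (fun j => j != special_index t) w.

(* Main.v *)
Require Import Defs.
From mathcomp Require Import all_boot all_order all_algebra.
Import GRing.Theory.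
Local Open Scope ring_scope.
Set Implicit Arguments. Unset Strict Implicit.

Fixpoint sumf (f : nat -> int) (n : nat) : int :=
  match n with 0%N => 0 | n'.+1 => sumf f n' + f n' end.
Definition cartanN t (a b : nat) : int :=
  if a == b then 2%:Z else if adjacent t a b then -1 else 0.
Definition dotN t (k : nat) (s : seq int) : int :=
  sumf (fun b => cartanN t k b * nth 0 s b) (rank t).
Definition app t (k : nat) (s : seq int) : seq int :=
  mkseq (fun i => nth 0 s i - (if i == k then dotN t k s else 0)) (rank t).
Definition appw t (ws : seq nat) (s : seq int) : seq int := foldr (app t) s ws.
Definition unitv (n k : nat) : seq int := mkseq (fun i => ((i == k) : int)) n.
Definition sgn (b : bool) (s : seq int) : seq int := if b then s else map (fun x => - x) s.
Definition inat t : nat := match t with E6 => 0%N | E7 => 6%N end.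

Definition good t (cert : seq (seq int * (bool * nat * seq nat))) : bool :=
  let n := rank t in
  let Lv := map fst cert in
  [&& all (fun e : seq int * (bool * nat * seq nat) =>
        let: (v, (sg, k, ws)) := e in
        [&& (k < n)%N, all (fun m => (m < n)%N && (m != inat t)) ws &
            v == sgn sg (appw t ws (unitv n k))]) cert,
      all (fun v => all (fun k => app t k v \in Lv) (iota 0 n)) Lv &
      all (fun j => unitv n j \in Lv) (iota 0 n)].
Definition cert6 : seq (seq int * (bool * nat * seq nat)) := [::
  ([:: (Posz 1); (Posz 0); (Posz 0); (Posz 0); (Posz 0); (Posz 0)], (true, 0%N, [:: ]));
  ([:: (Posz 1); (Posz 0); (Posz 1); (Posz 0); (Posz 0); (Posz 0)], (true, 0%N, [:: 2%N]));
  ([:: (Posz 1); (Posz 0); (Posz 1); (Posz 1); (Posz 0); (Posz 0)], (true, 0%N, [:: 3%N; 2%N]));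
  ([:: (Posz 1); (Posz 1); (Posz 1); (Posz 1); (Posz 0); (Posz 0)], (true, 0%N, [:: 1%N; 3%N; 2%N]));
  ([:: (Posz 1); (Posz 0); (Posz 1); (Posz 1); (Posz 1); (Posz 0)], (true, 0%N, [:: 4%N; 3%N; 2%N]));
  ([:: (Posz 1); (Posz 1); (Posz 1); (Posz 1); (Posz 1); (Posz 0)], (true, 0%N, [:: 4%N; 1%N; 3%N; 2%N]));
  ([:: (Posz 1); (Posz 0); (Posz 1); (Posz 1); (Posz 1); (Posz 1)], (true, 0%N, [:: 5%N; 4%N; 3%N; 2%N]));
  ([:: (Posz 1); (Posz 1); (Posz 1); (Posz 2); (Posz 1); (Posz 0)], (true, 0%N, [:: 3%N; 4%N; 1%N; 3%N; 2%N]));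
  ([:: (Posz 1); (Posz 1); (Posz 1); (Posz 1); (Posz 1); (Posz 1)], (true, 0%N, [:: 5%N; 4%N; 1%N; 3%N; 2%N]));
  ([:: (Posz 1); (Posz 1); (Posz 2); (Posz 2); (Posz 1); (Posz 0)], (true, 0%N, [:: 2%N; 3%N; 4%N; 1%N; 3%N; 2%N]));
  ([:: (Posz 1); (Posz 1); (Posz 1); (Posz 2); (Posz 1); (Posz 1)], (true, 0%N, [:: 5%N; 3%N; 4%N; 1%N; 3%N; 2%N]));
  ([:: (Posz 1); (Posz 1); (Posz 2); (Posz 2); (Posz 1); (Posz 1)], (true, 0%N, [:: 5%N; 2%N; 3%N; 4%N; 1%N; 3%N; 2%N]));
  ([:: (Posz 1); (Posz 1); (Posz 1); (Posz 2); (Posz 2); (Posz 1)], (true, 0%N, [:: 4%N; 5%N; 3%N; 4%N; 1%N; 3%N; 2%N]));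
  ([:: (Posz 1); (Posz 1); (Posz 2); (Posz 2); (Posz 2); (Posz 1)], (true, 0%N, [:: 4%N; 5%N; 2%N; 3%N; 4%N; 1%N; 3%N; 2%N]));
  ([:: (Posz 1); (Posz 1); (Posz 2); (Posz 3); (Posz 2); (Posz 1)], (true, 0%N, [:: 3%N; 4%N; 5%N; 2%N; 3%N; 4%N; 1%N; 3%N; 2%N]));
  ([:: (Posz 1); (Posz 2); (Posz 2); (Posz 3); (Posz 2); (Posz 1)], (true, 0%N, [:: 1%N; 3%N; 4%N; 5%N; 2%N; 3%N; 4%N; 1%N; 3%N; 2%N]));
  ([:: (Negz 0); (Posz 0); (Posz 0); (Posz 0); (Posz 0); (Posz 0)], (false, 0%N, [:: ]));
  ([:: (Negz 0); (Posz 0); (Negz 0); (Posz 0); (Posz 0); (Posz 0)], (false, 0%N, [:: 2%N]));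
  ([:: (Negz 0); (Posz 0); (Negz 0); (Negz 0); (Posz 0); (Posz 0)], (false, 0%N, [:: 3%N; 2%N]));
  ([:: (Negz 0); (Negz 0); (Negz 0); (Negz 0); (Posz 0); (Posz 0)], (false, 0%N, [:: 1%N; 3%N; 2%N]));
  ([:: (Negz 0); (Posz 0); (Negz 0); (Negz 0); (Negz 0); (Posz 0)], (false, 0%N, [:: 4%N; 3%N; 2%N]));
  ([:: (Negz 0); (Negz 0); (Negz 0); (Negz 0); (Negz 0); (Posz 0)], (false, 0%N, [:: 4%N; 1%N; 3%N; 2%N]));
  ([:: (Negz 0); (Posz 0); (Negz 0); (Negz 0); (Negz 0); (Negz 0)], (false, 0%N, [:: 5%N; 4%N; 3%N; 2%N]));
  ([:: (Negz 0); (Negz 0); (Negz 0); (Negz 1); (Negz 0); (Posz 0)], (false, 0%N, [:: 3%N; 4%N; 1%N; 3%N; 2%N]));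
  ([:: (Negz 0); (Negz 0); (Negz 0); (Negz 0); (Negz 0); (Negz 0)], (false, 0%N, [:: 5%N; 4%N; 1%N; 3%N; 2%N]));
  ([:: (Negz 0); (Negz 0); (Negz 1); (Negz 1); (Negz 0); (Posz 0)], (false, 0%N, [:: 2%N; 3%N; 4%N; 1%N; 3%N; 2%N]));
  ([:: (Negz 0); (Negz 0); (Negz 0); (Negz 1); (Negz 0); (Negz 0)], (false, 0%N, [:: 5%N; 3%N; 4%N; 1%N; 3%N; 2%N]));
  ([:: (Negz 0); (Negz 0); (Negz 1); (Negz 1); (Negz 0); (Negz 0)], (false, 0%N, [:: 5%N; 2%N; 3%N; 4%N; 1%N; 3%N; 2%N]));
  ([:: (Negz 0); (Negz 0); (Negz 0); (Negz 1); (Negz 1); (Negz 0)], (false, 0%N, [:: 4%N; 5%N; 3%N; 4%N; 1%N; 3%N; 2%N]));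
  ([:: (Negz 0); (Negz 0); (Negz 1); (Negz 1); (Negz 1); (Negz 0)], (false, 0%N, [:: 4%N; 5%N; 2%N; 3%N; 4%N; 1%N; 3%N; 2%N]));
  ([:: (Negz 0); (Negz 0); (Negz 1); (Negz 2); (Negz 1); (Negz 0)], (false, 0%N, [:: 3%N; 4%N; 5%N; 2%N; 3%N; 4%N; 1%N; 3%N; 2%N]));
  ([:: (Negz 0); (Negz 1); (Negz 1); (Negz 2); (Negz 1); (Negz 0)], (false, 0%N, [:: 1%N; 3%N; 4%N; 5%N; 2%N; 3%N; 4%N; 1%N; 3%N; 2%N]));
  ([:: (Posz 0); (Posz 1); (Posz 0); (Posz 0); (Posz 0); (Posz 0)], (true, 1%N, [:: ]));
  ([:: (Posz 0); (Negz 0); (Posz 0); (Posz 0); (Posz 0); (Posz 0)], (true, 1%N, [:: 1%N]));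
  ([:: (Posz 0); (Posz 1); (Posz 0); (Posz 1); (Posz 0); (Posz 0)], (true, 1%N, [:: 3%N]));
  ([:: (Posz 0); (Negz 0); (Posz 0); (Negz 0); (Posz 0); (Posz 0)], (true, 1%N, [:: 3%N; 1%N]));
  ([:: (Posz 0); (Posz 0); (Posz 0); (Posz 1); (Posz 0); (Posz 0)], (true, 1%N, [:: 1%N; 3%N]));
  ([:: (Posz 0); (Posz 1); (Posz 1); (Posz 1); (Posz 0); (Posz 0)], (true, 1%N, [:: 2%N; 3%N]));
  ([:: (Posz 0); (Posz 1); (Posz 0); (Posz 1); (Posz 1); (Posz 0)], (true, 1%N, [:: 4%N; 3%N]));
  ([:: (Posz 0); (Posz 0); (Posz 0); (Negz 0); (Posz 0); (Posz 0)], (true, 1%N, [:: 1%N; 3%N; 1%N]));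
  ([:: (Posz 0); (Negz 0); (Negz 0); (Negz 0); (Posz 0); (Posz 0)], (true, 1%N, [:: 2%N; 3%N; 1%N]));
  ([:: (Posz 0); (Negz 0); (Posz 0); (Negz 0); (Negz 0); (Posz 0)], (true, 1%N, [:: 4%N; 3%N; 1%N]));
  ([:: (Posz 0); (Posz 0); (Posz 1); (Posz 1); (Posz 0); (Posz 0)], (true, 1%N, [:: 2%N; 1%N; 3%N]));
  ([:: (Posz 0); (Posz 0); (Posz 0); (Posz 1); (Posz 1); (Posz 0)], (true, 1%N, [:: 4%N; 1%N; 3%N]));
  ([:: (Posz 0); (Posz 1); (Posz 1); (Posz 1); (Posz 1); (Posz 0)], (true, 1%N, [:: 4%N; 2%N; 3%N]));
  ([:: (Posz 0); (Posz 1); (Posz 0); (Posz 1); (Posz 1); (Posz 1)], (true, 1%N, [:: 5%N; 4%N; 3%N]));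
  ([:: (Posz 0); (Posz 0); (Negz 0); (Negz 0); (Posz 0); (Posz 0)], (true, 1%N, [:: 2%N; 1%N; 3%N; 1%N]));
  ([:: (Posz 0); (Posz 0); (Posz 0); (Negz 0); (Negz 0); (Posz 0)], (true, 1%N, [:: 4%N; 1%N; 3%N; 1%N]));
  ([:: (Posz 0); (Negz 0); (Negz 0); (Negz 0); (Negz 0); (Posz 0)], (true, 1%N, [:: 4%N; 2%N; 3%N; 1%N]));
  ([:: (Posz 0); (Negz 0); (Posz 0); (Negz 0); (Negz 0); (Negz 0)], (true, 1%N, [:: 5%N; 4%N; 3%N; 1%N]));
  ([:: (Posz 0); (Posz 0); (Posz 1); (Posz 0); (Posz 0); (Posz 0)], (true, 1%N, [:: 3%N; 2%N; 1%N; 3%N]));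
  ([:: (Posz 0); (Posz 0); (Posz 1); (Posz 1); (Posz 1); (Posz 0)], (true, 1%N, [:: 4%N; 2%N; 1%N; 3%N]));
  ([:: (Posz 0); (Posz 0); (Posz 0); (Posz 0); (Posz 1); (Posz 0)], (true, 1%N, [:: 3%N; 4%N; 1%N; 3%N]));
  ([:: (Posz 0); (Posz 0); (Posz 0); (Posz 1); (Posz 1); (Posz 1)], (true, 1%N, [:: 5%N; 4%N; 1%N; 3%N]));
  ([:: (Posz 0); (Posz 1); (Posz 1); (Posz 2); (Posz 1); (Posz 0)], (true, 1%N, [:: 3%N; 4%N; 2%N; 3%N]));
  ([:: (Posz 0); (Posz 1); (Posz 1); (Posz 1); (Posz 1); (Posz 1)], (true, 1%N, [:: 5%N; 4%N; 2%N; 3%N]));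
  ([:: (Posz 0); (Posz 0); (Negz 0); (Posz 0); (Posz 0); (Posz 0)], (true, 1%N, [:: 3%N; 2%N; 1%N; 3%N; 1%N]));
  ([:: (Posz 0); (Posz 0); (Negz 0); (Negz 0); (Negz 0); (Posz 0)], (true, 1%N, [:: 4%N; 2%N; 1%N; 3%N; 1%N]));
  ([:: (Posz 0); (Posz 0); (Posz 0); (Posz 0); (Negz 0); (Posz 0)], (true, 1%N, [:: 3%N; 4%N; 1%N; 3%N; 1%N]));
  ([:: (Posz 0); (Posz 0); (Posz 0); (Negz 0); (Negz 0); (Negz 0)], (true, 1%N, [:: 5%N; 4%N; 1%N; 3%N; 1%N]));
  ([:: (Posz 0); (Negz 0); (Negz 0); (Negz 1); (Negz 0); (Posz 0)], (true, 1%N, [:: 3%N; 4%N; 2%N; 3%N; 1%N]));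
  ([:: (Posz 0); (Negz 0); (Negz 0); (Negz 0); (Negz 0); (Negz 0)], (true, 1%N, [:: 5%N; 4%N; 2%N; 3%N; 1%N]));
  ([:: (Posz 0); (Posz 0); (Posz 1); (Posz 1); (Posz 1); (Posz 1)], (true, 1%N, [:: 5%N; 4%N; 2%N; 1%N; 3%N]));
  ([:: (Posz 0); (Posz 0); (Posz 0); (Posz 0); (Posz 1); (Posz 1)], (true, 1%N, [:: 5%N; 3%N; 4%N; 1%N; 3%N]));
  ([:: (Posz 0); (Posz 1); (Posz 1); (Posz 2); (Posz 1); (Posz 1)], (true, 1%N, [:: 5%N; 3%N; 4%N; 2%N; 3%N]));
  ([:: (Posz 0); (Posz 0); (Negz 0); (Negz 0); (Negz 0); (Negz 0)], (true, 1%N, [:: 5%N; 4%N; 2%N; 1%N; 3%N; 1%N]));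
  ([:: (Posz 0); (Posz 0); (Posz 0); (Posz 0); (Negz 0); (Negz 0)], (true, 1%N, [:: 5%N; 3%N; 4%N; 1%N; 3%N; 1%N]));
  ([:: (Posz 0); (Negz 0); (Negz 0); (Negz 1); (Negz 0); (Negz 0)], (true, 1%N, [:: 5%N; 3%N; 4%N; 2%N; 3%N; 1%N]));
  ([:: (Posz 0); (Posz 0); (Posz 0); (Posz 0); (Posz 0); (Posz 1)], (true, 1%N, [:: 4%N; 5%N; 3%N; 4%N; 1%N; 3%N]));
  ([:: (Posz 0); (Posz 1); (Posz 1); (Posz 2); (Posz 2); (Posz 1)], (true, 1%N, [:: 4%N; 5%N; 3%N; 4%N; 2%N; 3%N]));
  ([:: (Posz 0); (Posz 0); (Posz 0); (Posz 0); (Posz 0); (Negz 0)], (true, 1%N, [:: 4%N; 5%N; 3%N; 4%N; 1%N; 3%N; 1%N]));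
  ([:: (Posz 0); (Negz 0); (Negz 0); (Negz 1); (Negz 1); (Negz 0)], (true, 1%N, [:: 4%N; 5%N; 3%N; 4%N; 2%N; 3%N; 1%N]))].
Definition cert7 : seq (seq int * (bool * nat * seq nat)) := [::
  ([:: (Posz 1); (Posz 0); (Posz 0); (Posz 0); (Posz 0); (Posz 0); (Posz 0)], (true, 0%N, [:: ]));
  ([:: (Negz 0); (Posz 0); (Posz 0); (Posz 0); (Posz 0); (Posz 0); (Posz 0)], (true, 0%N, [:: 0%N]));
  ([:: (Posz 1); (Posz 0); (Posz 1); (Posz 0); (Posz 0); (Posz 0); (Posz 0)], (true, 0%N, [:: 2%N]));
  ([:: (Negz 0); (Posz 0); (Negz 0); (Posz 0); (Posz 0); (Posz 0); (Posz 0)], (true, 0%N, [:: 2%N; 0%N]));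
  ([:: (Posz 0); (Posz 0); (Posz 1); (Posz 0); (Posz 0); (Posz 0); (Posz 0)], (true, 0%N, [:: 0%N; 2%N]));
  ([:: (Posz 1); (Posz 0); (Posz 1); (Posz 1); (Posz 0); (Posz 0); (Posz 0)], (true, 0%N, [:: 3%N; 2%N]));
  ([:: (Posz 0); (Posz 0); (Negz 0); (Posz 0); (Posz 0); (Posz 0); (Posz 0)], (true, 0%N, [:: 0%N; 2%N; 0%N]));
  ([:: (Negz 0); (Posz 0); (Negz 0); (Negz 0); (Posz 0); (Posz 0); (Posz 0)], (true, 0%N, [:: 3%N; 2%N; 0%N]));
  ([:: (Posz 0); (Posz 0); (Posz 1); (Posz 1); (Posz 0); (Posz 0); (Posz 0)], (true, 0%N, [:: 3%N; 0%N; 2%N]));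
  ([:: (Posz 1); (Posz 1); (Posz 1); (Posz 1); (Posz 0); (Posz 0); (Posz 0)], (true, 0%N, [:: 1%N; 3%N; 2%N]));
  ([:: (Posz 1); (Posz 0); (Posz 1); (Posz 1); (Posz 1); (Posz 0); (Posz 0)], (true, 0%N, [:: 4%N; 3%N; 2%N]));
  ([:: (Posz 0); (Posz 0); (Negz 0); (Negz 0); (Posz 0); (Posz 0); (Posz 0)], (true, 0%N, [:: 3%N; 0%N; 2%N; 0%N]));
  ([:: (Negz 0); (Negz 0); (Negz 0); (Negz 0); (Posz 0); (Posz 0); (Posz 0)], (true, 0%N, [:: 1%N; 3%N; 2%N; 0%N]));
  ([:: (Negz 0); (Posz 0); (Negz 0); (Negz 0); (Negz 0); (Posz 0); (Posz 0)], (true, 0%N, [:: 4%N; 3%N; 2%N; 0%N]));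
  ([:: (Posz 0); (Posz 1); (Posz 1); (Posz 1); (Posz 0); (Posz 0); (Posz 0)], (true, 0%N, [:: 1%N; 3%N; 0%N; 2%N]));
  ([:: (Posz 0); (Posz 0); (Posz 0); (Posz 1); (Posz 0); (Posz 0); (Posz 0)], (true, 0%N, [:: 2%N; 3%N; 0%N; 2%N]));
  ([:: (Posz 0); (Posz 0); (Posz 1); (Posz 1); (Posz 1); (Posz 0); (Posz 0)], (true, 0%N, [:: 4%N; 3%N; 0%N; 2%N]));
  ([:: (Posz 1); (Posz 1); (Posz 1); (Posz 1); (Posz 1); (Posz 0); (Posz 0)], (true, 0%N, [:: 4%N; 1%N; 3%N; 2%N]));
  ([:: (Posz 1); (Posz 0); (Posz 1); (Posz 1); (Posz 1); (Posz 1); (Posz 0)], (true, 0%N, [:: 5%N; 4%N; 3%N; 2%N]));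
  ([:: (Posz 0); (Negz 0); (Negz 0); (Negz 0); (Posz 0); (Posz 0); (Posz 0)], (true, 0%N, [:: 1%N; 3%N; 0%N; 2%N; 0%N]));
  ([:: (Posz 0); (Posz 0); (Posz 0); (Negz 0); (Posz 0); (Posz 0); (Posz 0)], (true, 0%N, [:: 2%N; 3%N; 0%N; 2%N; 0%N]));
  ([:: (Posz 0); (Posz 0); (Negz 0); (Negz 0); (Negz 0); (Posz 0); (Posz 0)], (true, 0%N, [:: 4%N; 3%N; 0%N; 2%N; 0%N]));
  ([:: (Negz 0); (Negz 0); (Negz 0); (Negz 0); (Negz 0); (Posz 0); (Posz 0)], (true, 0%N, [:: 4%N; 1%N; 3%N; 2%N; 0%N]));
  ([:: (Negz 0); (Posz 0); (Negz 0); (Negz 0); (Negz 0); (Negz 0); (Posz 0)], (true, 0%N, [:: 5%N; 4%N; 3%N; 2%N; 0%N]));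
  ([:: (Posz 0); (Posz 1); (Posz 0); (Posz 1); (Posz 0); (Posz 0); (Posz 0)], (true, 0%N, [:: 2%N; 1%N; 3%N; 0%N; 2%N]));
  ([:: (Posz 0); (Posz 1); (Posz 1); (Posz 1); (Posz 1); (Posz 0); (Posz 0)], (true, 0%N, [:: 4%N; 1%N; 3%N; 0%N; 2%N]));
  ([:: (Posz 0); (Posz 0); (Posz 0); (Posz 1); (Posz 1); (Posz 0); (Posz 0)], (true, 0%N, [:: 4%N; 2%N; 3%N; 0%N; 2%N]));
  ([:: (Posz 0); (Posz 0); (Posz 1); (Posz 1); (Posz 1); (Posz 1); (Posz 0)], (true, 0%N, [:: 5%N; 4%N; 3%N; 0%N; 2%N]));
  ([:: (Posz 1); (Posz 1); (Posz 1); (Posz 2); (Posz 1); (Posz 0); (Posz 0)], (true, 0%N, [:: 3%N; 4%N; 1%N; 3%N; 2%N]));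
  ([:: (Posz 1); (Posz 1); (Posz 1); (Posz 1); (Posz 1); (Posz 1); (Posz 0)], (true, 0%N, [:: 5%N; 4%N; 1%N; 3%N; 2%N]));
  ([:: (Posz 0); (Negz 0); (Posz 0); (Negz 0); (Posz 0); (Posz 0); (Posz 0)], (true, 0%N, [:: 2%N; 1%N; 3%N; 0%N; 2%N; 0%N]));
  ([:: (Posz 0); (Negz 0); (Negz 0); (Negz 0); (Negz 0); (Posz 0); (Posz 0)], (true, 0%N, [:: 4%N; 1%N; 3%N; 0%N; 2%N; 0%N]));
  ([:: (Posz 0); (Posz 0); (Posz 0); (Negz 0); (Negz 0); (Posz 0); (Posz 0)], (true, 0%N, [:: 4%N; 2%N; 3%N; 0%N; 2%N; 0%N]));
  ([:: (Posz 0); (Posz 0); (Negz 0); (Negz 0); (Negz 0); (Negz 0); (Posz 0)], (true, 0%N, [:: 5%N; 4%N; 3%N; 0%N; 2%N; 0%N]));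
  ([:: (Negz 0); (Negz 0); (Negz 0); (Negz 1); (Negz 0); (Posz 0); (Posz 0)], (true, 0%N, [:: 3%N; 4%N; 1%N; 3%N; 2%N; 0%N]));
  ([:: (Negz 0); (Negz 0); (Negz 0); (Negz 0); (Negz 0); (Negz 0); (Posz 0)], (true, 0%N, [:: 5%N; 4%N; 1%N; 3%N; 2%N; 0%N]));
  ([:: (Posz 0); (Posz 1); (Posz 0); (Posz 0); (Posz 0); (Posz 0); (Posz 0)], (true, 0%N, [:: 3%N; 2%N; 1%N; 3%N; 0%N; 2%N]));
  ([:: (Posz 0); (Posz 1); (Posz 0); (Posz 1); (Posz 1); (Posz 0); (Posz 0)], (true, 0%N, [:: 4%N; 2%N; 1%N; 3%N; 0%N; 2%N]));
  ([:: (Posz 0); (Posz 1); (Posz 1); (Posz 2); (Posz 1); (Posz 0); (Posz 0)], (true, 0%N, [:: 3%N; 4%N; 1%N; 3%N; 0%N; 2%N]));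
  ([:: (Posz 0); (Posz 1); (Posz 1); (Posz 1); (Posz 1); (Posz 1); (Posz 0)], (true, 0%N, [:: 5%N; 4%N; 1%N; 3%N; 0%N; 2%N]));
  ([:: (Posz 0); (Posz 0); (Posz 0); (Posz 0); (Posz 1); (Posz 0); (Posz 0)], (true, 0%N, [:: 3%N; 4%N; 2%N; 3%N; 0%N; 2%N]));
  ([:: (Posz 0); (Posz 0); (Posz 0); (Posz 1); (Posz 1); (Posz 1); (Posz 0)], (true, 0%N, [:: 5%N; 4%N; 2%N; 3%N; 0%N; 2%N]));
  ([:: (Posz 1); (Posz 1); (Posz 2); (Posz 2); (Posz 1); (Posz 0); (Posz 0)], (true, 0%N, [:: 2%N; 3%N; 4%N; 1%N; 3%N; 2%N]));
  ([:: (Posz 1); (Posz 1); (Posz 1); (Posz 2); (Posz 1); (Posz 1); (Posz 0)], (true, 0%N, [:: 5%N; 3%N; 4%N; 1%N; 3%N; 2%N]));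
  ([:: (Posz 0); (Negz 0); (Posz 0); (Posz 0); (Posz 0); (Posz 0); (Posz 0)], (true, 0%N, [:: 3%N; 2%N; 1%N; 3%N; 0%N; 2%N; 0%N]));
  ([:: (Posz 0); (Negz 0); (Posz 0); (Negz 0); (Negz 0); (Posz 0); (Posz 0)], (true, 0%N, [:: 4%N; 2%N; 1%N; 3%N; 0%N; 2%N; 0%N]));
  ([:: (Posz 0); (Negz 0); (Negz 0); (Negz 1); (Negz 0); (Posz 0); (Posz 0)], (true, 0%N, [:: 3%N; 4%N; 1%N; 3%N; 0%N; 2%N; 0%N]));
  ([:: (Posz 0); (Negz 0); (Negz 0); (Negz 0); (Negz 0); (Negz 0); (Posz 0)], (true, 0%N, [:: 5%N; 4%N; 1%N; 3%N; 0%N; 2%N; 0%N]));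
  ([:: (Posz 0); (Posz 0); (Posz 0); (Posz 0); (Negz 0); (Posz 0); (Posz 0)], (true, 0%N, [:: 3%N; 4%N; 2%N; 3%N; 0%N; 2%N; 0%N]));
  ([:: (Posz 0); (Posz 0); (Posz 0); (Negz 0); (Negz 0); (Negz 0); (Posz 0)], (true, 0%N, [:: 5%N; 4%N; 2%N; 3%N; 0%N; 2%N; 0%N]));
  ([:: (Negz 0); (Negz 0); (Negz 1); (Negz 1); (Negz 0); (Posz 0); (Posz 0)], (true, 0%N, [:: 2%N; 3%N; 4%N; 1%N; 3%N; 2%N; 0%N]));
  ([:: (Negz 0); (Negz 0); (Negz 0); (Negz 1); (Negz 0); (Negz 0); (Posz 0)], (true, 0%N, [:: 5%N; 3%N; 4%N; 1%N; 3%N; 2%N; 0%N]));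
  ([:: (Posz 0); (Posz 1); (Posz 0); (Posz 1); (Posz 1); (Posz 1); (Posz 0)], (true, 0%N, [:: 5%N; 4%N; 2%N; 1%N; 3%N; 0%N; 2%N]));
  ([:: (Posz 0); (Posz 1); (Posz 1); (Posz 2); (Posz 1); (Posz 1); (Posz 0)], (true, 0%N, [:: 5%N; 3%N; 4%N; 1%N; 3%N; 0%N; 2%N]));
  ([:: (Posz 0); (Posz 0); (Posz 0); (Posz 0); (Posz 1); (Posz 1); (Posz 0)], (true, 0%N, [:: 5%N; 3%N; 4%N; 2%N; 3%N; 0%N; 2%N]));
  ([:: (Posz 1); (Posz 1); (Posz 2); (Posz 2); (Posz 1); (Posz 1); (Posz 0)], (true, 0%N, [:: 5%N; 2%N; 3%N; 4%N; 1%N; 3%N; 2%N]));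
  ([:: (Posz 1); (Posz 1); (Posz 1); (Posz 2); (Posz 2); (Posz 1); (Posz 0)], (true, 0%N, [:: 4%N; 5%N; 3%N; 4%N; 1%N; 3%N; 2%N]));
  ([:: (Posz 0); (Negz 0); (Posz 0); (Negz 0); (Negz 0); (Negz 0); (Posz 0)], (true, 0%N, [:: 5%N; 4%N; 2%N; 1%N; 3%N; 0%N; 2%N; 0%N]));
  ([:: (Posz 0); (Negz 0); (Negz 0); (Negz 1); (Negz 0); (Negz 0); (Posz 0)], (true, 0%N, [:: 5%N; 3%N; 4%N; 1%N; 3%N; 0%N; 2%N; 0%N]));
  ([:: (Posz 0); (Posz 0); (Posz 0); (Posz 0); (Negz 0); (Negz 0); (Posz 0)], (true, 0%N, [:: 5%N; 3%N; 4%N; 2%N; 3%N; 0%N; 2%N; 0%N]));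
  ([:: (Negz 0); (Negz 0); (Negz 1); (Negz 1); (Negz 0); (Negz 0); (Posz 0)], (true, 0%N, [:: 5%N; 2%N; 3%N; 4%N; 1%N; 3%N; 2%N; 0%N]));
  ([:: (Negz 0); (Negz 0); (Negz 0); (Negz 1); (Negz 1); (Negz 0); (Posz 0)], (true, 0%N, [:: 4%N; 5%N; 3%N; 4%N; 1%N; 3%N; 2%N; 0%N]));
  ([:: (Posz 0); (Posz 1); (Posz 1); (Posz 2); (Posz 2); (Posz 1); (Posz 0)], (true, 0%N, [:: 4%N; 5%N; 3%N; 4%N; 1%N; 3%N; 0%N; 2%N]));
  ([:: (Posz 0); (Posz 0); (Posz 0); (Posz 0); (Posz 0); (Posz 1); (Posz 0)], (true, 0%N, [:: 4%N; 5%N; 3%N; 4%N; 2%N; 3%N; 0%N; 2%N]));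
  ([:: (Posz 1); (Posz 1); (Posz 2); (Posz 2); (Posz 2); (Posz 1); (Posz 0)], (true, 0%N, [:: 4%N; 5%N; 2%N; 3%N; 4%N; 1%N; 3%N; 2%N]));
  ([:: (Posz 0); (Negz 0); (Negz 0); (Negz 1); (Negz 1); (Negz 0); (Posz 0)], (true, 0%N, [:: 4%N; 5%N; 3%N; 4%N; 1%N; 3%N; 0%N; 2%N; 0%N]));
  ([:: (Posz 0); (Posz 0); (Posz 0); (Posz 0); (Posz 0); (Negz 0); (Posz 0)], (true, 0%N, [:: 4%N; 5%N; 3%N; 4%N; 2%N; 3%N; 0%N; 2%N; 0%N]));
  ([:: (Negz 0); (Negz 0); (Negz 1); (Negz 1); (Negz 1); (Negz 0); (Posz 0)], (true, 0%N, [:: 4%N; 5%N; 2%N; 3%N; 4%N; 1%N; 3%N; 2%N; 0%N]));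
  ([:: (Posz 1); (Posz 1); (Posz 2); (Posz 3); (Posz 2); (Posz 1); (Posz 0)], (true, 0%N, [:: 3%N; 4%N; 5%N; 2%N; 3%N; 4%N; 1%N; 3%N; 2%N]));
  ([:: (Negz 0); (Negz 0); (Negz 1); (Negz 2); (Negz 1); (Negz 0); (Posz 0)], (true, 0%N, [:: 3%N; 4%N; 5%N; 2%N; 3%N; 4%N; 1%N; 3%N; 2%N; 0%N]));
  ([:: (Posz 1); (Posz 2); (Posz 2); (Posz 3); (Posz 2); (Posz 1); (Posz 0)], (true, 0%N, [:: 1%N; 3%N; 4%N; 5%N; 2%N; 3%N; 4%N; 1%N; 3%N; 2%N]));
  ([:: (Negz 0); (Negz 1); (Negz 1); (Negz 2); (Negz 1); (Negz 0); (Posz 0)], (true, 0%N, [:: 1%N; 3%N; 4%N; 5%N; 2%N; 3%N; 4%N; 1%N; 3%N; 2%N; 0%N]));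
  ([:: (Posz 0); (Posz 0); (Posz 0); (Posz 0); (Posz 0); (Posz 0); (Posz 1)], (true, 6%N, [:: ]));
  ([:: (Posz 0); (Posz 0); (Posz 0); (Posz 0); (Posz 0); (Posz 1); (Posz 1)], (true, 6%N, [:: 5%N]));
  ([:: (Posz 0); (Posz 0); (Posz 0); (Posz 0); (Posz 1); (Posz 1); (Posz 1)], (true, 6%N, [:: 4%N; 5%N]));
  ([:: (Posz 0); (Posz 0); (Posz 0); (Posz 1); (Posz 1); (Posz 1); (Posz 1)], (true, 6%N, [:: 3%N; 4%N; 5%N]));
  ([:: (Posz 0); (Posz 1); (Posz 0); (Posz 1); (Posz 1); (Posz 1); (Posz 1)], (true, 6%N, [:: 1%N; 3%N; 4%N; 5%N]));
  ([:: (Posz 0); (Posz 0); (Posz 1); (Posz 1); (Posz 1); (Posz 1); (Posz 1)], (true, 6%N, [:: 2%N; 3%N; 4%N; 5%N]));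
  ([:: (Posz 0); (Posz 1); (Posz 1); (Posz 1); (Posz 1); (Posz 1); (Posz 1)], (true, 6%N, [:: 2%N; 1%N; 3%N; 4%N; 5%N]));
  ([:: (Posz 1); (Posz 0); (Posz 1); (Posz 1); (Posz 1); (Posz 1); (Posz 1)], (true, 6%N, [:: 0%N; 2%N; 3%N; 4%N; 5%N]));
  ([:: (Posz 1); (Posz 1); (Posz 1); (Posz 1); (Posz 1); (Posz 1); (Posz 1)], (true, 6%N, [:: 0%N; 2%N; 1%N; 3%N; 4%N; 5%N]));
  ([:: (Posz 0); (Posz 1); (Posz 1); (Posz 2); (Posz 1); (Posz 1); (Posz 1)], (true, 6%N, [:: 3%N; 2%N; 1%N; 3%N; 4%N; 5%N]));
  ([:: (Posz 1); (Posz 1); (Posz 1); (Posz 2); (Posz 1); (Posz 1); (Posz 1)], (true, 6%N, [:: 3%N; 0%N; 2%N; 1%N; 3%N; 4%N; 5%N]));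
  ([:: (Posz 0); (Posz 1); (Posz 1); (Posz 2); (Posz 2); (Posz 1); (Posz 1)], (true, 6%N, [:: 4%N; 3%N; 2%N; 1%N; 3%N; 4%N; 5%N]));
  ([:: (Posz 1); (Posz 1); (Posz 2); (Posz 2); (Posz 1); (Posz 1); (Posz 1)], (true, 6%N, [:: 2%N; 3%N; 0%N; 2%N; 1%N; 3%N; 4%N; 5%N]));
  ([:: (Posz 1); (Posz 1); (Posz 1); (Posz 2); (Posz 2); (Posz 1); (Posz 1)], (true, 6%N, [:: 4%N; 3%N; 0%N; 2%N; 1%N; 3%N; 4%N; 5%N]));
  ([:: (Posz 0); (Posz 1); (Posz 1); (Posz 2); (Posz 2); (Posz 2); (Posz 1)], (true, 6%N, [:: 5%N; 4%N; 3%N; 2%N; 1%N; 3%N; 4%N; 5%N]));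
  ([:: (Posz 1); (Posz 1); (Posz 2); (Posz 2); (Posz 2); (Posz 1); (Posz 1)], (true, 6%N, [:: 4%N; 2%N; 3%N; 0%N; 2%N; 1%N; 3%N; 4%N; 5%N]));
  ([:: (Posz 1); (Posz 1); (Posz 1); (Posz 2); (Posz 2); (Posz 2); (Posz 1)], (true, 6%N, [:: 5%N; 4%N; 3%N; 0%N; 2%N; 1%N; 3%N; 4%N; 5%N]));
  ([:: (Posz 1); (Posz 1); (Posz 2); (Posz 3); (Posz 2); (Posz 1); (Posz 1)], (true, 6%N, [:: 3%N; 4%N; 2%N; 3%N; 0%N; 2%N; 1%N; 3%N; 4%N; 5%N]));
  ([:: (Posz 1); (Posz 1); (Posz 2); (Posz 2); (Posz 2); (Posz 2); (Posz 1)], (true, 6%N, [:: 5%N; 4%N; 2%N; 3%N; 0%N; 2%N; 1%N; 3%N; 4%N; 5%N]));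
  ([:: (Posz 1); (Posz 2); (Posz 2); (Posz 3); (Posz 2); (Posz 1); (Posz 1)], (true, 6%N, [:: 1%N; 3%N; 4%N; 2%N; 3%N; 0%N; 2%N; 1%N; 3%N; 4%N; 5%N]));
  ([:: (Posz 1); (Posz 1); (Posz 2); (Posz 3); (Posz 2); (Posz 2); (Posz 1)], (true, 6%N, [:: 5%N; 3%N; 4%N; 2%N; 3%N; 0%N; 2%N; 1%N; 3%N; 4%N; 5%N]));
  ([:: (Posz 1); (Posz 2); (Posz 2); (Posz 3); (Posz 2); (Posz 2); (Posz 1)], (true, 6%N, [:: 5%N; 1%N; 3%N; 4%N; 2%N; 3%N; 0%N; 2%N; 1%N; 3%N; 4%N; 5%N]));
  ([:: (Posz 1); (Posz 1); (Posz 2); (Posz 3); (Posz 3); (Posz 2); (Posz 1)], (true, 6%N, [:: 4%N; 5%N; 3%N; 4%N; 2%N; 3%N; 0%N; 2%N; 1%N; 3%N; 4%N; 5%N]));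
  ([:: (Posz 1); (Posz 2); (Posz 2); (Posz 3); (Posz 3); (Posz 2); (Posz 1)], (true, 6%N, [:: 4%N; 5%N; 1%N; 3%N; 4%N; 2%N; 3%N; 0%N; 2%N; 1%N; 3%N; 4%N; 5%N]));
  ([:: (Posz 1); (Posz 2); (Posz 2); (Posz 4); (Posz 3); (Posz 2); (Posz 1)], (true, 6%N, [:: 3%N; 4%N; 5%N; 1%N; 3%N; 4%N; 2%N; 3%N; 0%N; 2%N; 1%N; 3%N; 4%N; 5%N]));
  ([:: (Posz 1); (Posz 2); (Posz 3); (Posz 4); (Posz 3); (Posz 2); (Posz 1)], (true, 6%N, [:: 2%N; 3%N; 4%N; 5%N; 1%N; 3%N; 4%N; 2%N; 3%N; 0%N; 2%N; 1%N; 3%N; 4%N; 5%N]));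
  ([:: (Posz 2); (Posz 2); (Posz 3); (Posz 4); (Posz 3); (Posz 2); (Posz 1)], (true, 6%N, [:: 0%N; 2%N; 3%N; 4%N; 5%N; 1%N; 3%N; 4%N; 2%N; 3%N; 0%N; 2%N; 1%N; 3%N; 4%N; 5%N]));
  ([:: (Posz 0); (Posz 0); (Posz 0); (Posz 0); (Posz 0); (Posz 0); (Negz 0)], (false, 6%N, [:: ]));
  ([:: (Posz 0); (Posz 0); (Posz 0); (Posz 0); (Posz 0); (Negz 0); (Negz 0)], (false, 6%N, [:: 5%N]));
  ([:: (Posz 0); (Posz 0); (Posz 0); (Posz 0); (Negz 0); (Negz 0); (Negz 0)], (false, 6%N, [:: 4%N; 5%N]));
  ([:: (Posz 0); (Posz 0); (Posz 0); (Negz 0); (Negz 0); (Negz 0); (Negz 0)], (false, 6%N, [:: 3%N; 4%N; 5%N]));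
  ([:: (Posz 0); (Negz 0); (Posz 0); (Negz 0); (Negz 0); (Negz 0); (Negz 0)], (false, 6%N, [:: 1%N; 3%N; 4%N; 5%N]));
  ([:: (Posz 0); (Posz 0); (Negz 0); (Negz 0); (Negz 0); (Negz 0); (Negz 0)], (false, 6%N, [:: 2%N; 3%N; 4%N; 5%N]));
  ([:: (Posz 0); (Negz 0); (Negz 0); (Negz 0); (Negz 0); (Negz 0); (Negz 0)], (false, 6%N, [:: 2%N; 1%N; 3%N; 4%N; 5%N]));
  ([:: (Negz 0); (Posz 0); (Negz 0); (Negz 0); (Negz 0); (Negz 0); (Negz 0)], (false, 6%N, [:: 0%N; 2%N; 3%N; 4%N; 5%N]));
  ([:: (Negz 0); (Negz 0); (Negz 0); (Negz 0); (Negz 0); (Negz 0); (Negz 0)], (false, 6%N, [:: 0%N; 2%N; 1%N; 3%N; 4%N; 5%N]));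
  ([:: (Posz 0); (Negz 0); (Negz 0); (Negz 1); (Negz 0); (Negz 0); (Negz 0)], (false, 6%N, [:: 3%N; 2%N; 1%N; 3%N; 4%N; 5%N]));
  ([:: (Negz 0); (Negz 0); (Negz 0); (Negz 1); (Negz 0); (Negz 0); (Negz 0)], (false, 6%N, [:: 3%N; 0%N; 2%N; 1%N; 3%N; 4%N; 5%N]));
  ([:: (Posz 0); (Negz 0); (Negz 0); (Negz 1); (Negz 1); (Negz 0); (Negz 0)], (false, 6%N, [:: 4%N; 3%N; 2%N; 1%N; 3%N; 4%N; 5%N]));
  ([:: (Negz 0); (Negz 0); (Negz 1); (Negz 1); (Negz 0); (Negz 0); (Negz 0)], (false, 6%N, [:: 2%N; 3%N; 0%N; 2%N; 1%N; 3%N; 4%N; 5%N]));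
  ([:: (Negz 0); (Negz 0); (Negz 0); (Negz 1); (Negz 1); (Negz 0); (Negz 0)], (false, 6%N, [:: 4%N; 3%N; 0%N; 2%N; 1%N; 3%N; 4%N; 5%N]));
  ([:: (Posz 0); (Negz 0); (Negz 0); (Negz 1); (Negz 1); (Negz 1); (Negz 0)], (false, 6%N, [:: 5%N; 4%N; 3%N; 2%N; 1%N; 3%N; 4%N; 5%N]));
  ([:: (Negz 0); (Negz 0); (Negz 1); (Negz 1); (Negz 1); (Negz 0); (Negz 0)], (false, 6%N, [:: 4%N; 2%N; 3%N; 0%N; 2%N; 1%N; 3%N; 4%N; 5%N]));
  ([:: (Negz 0); (Negz 0); (Negz 0); (Negz 1); (Negz 1); (Negz 1); (Negz 0)], (false, 6%N, [:: 5%N; 4%N; 3%N; 0%N; 2%N; 1%N; 3%N; 4%N; 5%N]));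
  ([:: (Negz 0); (Negz 0); (Negz 1); (Negz 2); (Negz 1); (Negz 0); (Negz 0)], (false, 6%N, [:: 3%N; 4%N; 2%N; 3%N; 0%N; 2%N; 1%N; 3%N; 4%N; 5%N]));
  ([:: (Negz 0); (Negz 0); (Negz 1); (Negz 1); (Negz 1); (Negz 1); (Negz 0)], (false, 6%N, [:: 5%N; 4%N; 2%N; 3%N; 0%N; 2%N; 1%N; 3%N; 4%N; 5%N]));
  ([:: (Negz 0); (Negz 1); (Negz 1); (Negz 2); (Negz 1); (Negz 0); (Negz 0)], (false, 6%N, [:: 1%N; 3%N; 4%N; 2%N; 3%N; 0%N; 2%N; 1%N; 3%N; 4%N; 5%N]));
  ([:: (Negz 0); (Negz 0); (Negz 1); (Negz 2); (Negz 1); (Negz 1); (Negz 0)], (false, 6%N, [:: 5%N; 3%N; 4%N; 2%N; 3%N; 0%N; 2%N; 1%N; 3%N; 4%N; 5%N]));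
  ([:: (Negz 0); (Negz 1); (Negz 1); (Negz 2); (Negz 1); (Negz 1); (Negz 0)], (false, 6%N, [:: 5%N; 1%N; 3%N; 4%N; 2%N; 3%N; 0%N; 2%N; 1%N; 3%N; 4%N; 5%N]));
  ([:: (Negz 0); (Negz 0); (Negz 1); (Negz 2); (Negz 2); (Negz 1); (Negz 0)], (false, 6%N, [:: 4%N; 5%N; 3%N; 4%N; 2%N; 3%N; 0%N; 2%N; 1%N; 3%N; 4%N; 5%N]));
  ([:: (Negz 0); (Negz 1); (Negz 1); (Negz 2); (Negz 2); (Negz 1); (Negz 0)], (false, 6%N, [:: 4%N; 5%N; 1%N; 3%N; 4%N; 2%N; 3%N; 0%N; 2%N; 1%N; 3%N; 4%N; 5%N]));
  ([:: (Negz 0); (Negz 1); (Negz 1); (Negz 3); (Negz 2); (Negz 1); (Negz 0)], (false, 6%N, [:: 3%N; 4%N; 5%N; 1%N; 3%N; 4%N; 2%N; 3%N; 0%N; 2%N; 1%N; 3%N; 4%N; 5%N]));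
  ([:: (Negz 0); (Negz 1); (Negz 2); (Negz 3); (Negz 2); (Negz 1); (Negz 0)], (false, 6%N, [:: 2%N; 3%N; 4%N; 5%N; 1%N; 3%N; 4%N; 2%N; 3%N; 0%N; 2%N; 1%N; 3%N; 4%N; 5%N]));
  ([:: (Negz 1); (Negz 1); (Negz 2); (Negz 3); (Negz 2); (Negz 1); (Negz 0)], (false, 6%N, [:: 0%N; 2%N; 3%N; 4%N; 5%N; 1%N; 3%N; 4%N; 2%N; 3%N; 0%N; 2%N; 1%N; 3%N; 4%N; 5%N]))].
Definition vec n (s : seq int) : 'cV[int]_n := \col_i nth 0 s i.

Lemma sumfE f n : sumf f n = \sum_(b < n) f b.
Proof. elim: n => [|n IH] /=; first by rewrite big_ord0. by rewrite big_ord_recr IH. Qed.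

Lemma app_ok t (k : 'I_(rank t)) s :
  sref k *m vec (rank t) s = vec (rank t) (app t k s).
Proof.
apply/matrixP=> i j; rewrite (ord1 j) {j}.
rewrite /sref /refl /simple_root mulmxBl mul1mx -!mulmxA trmx_delta -rowE.
rewrite !mxE big_ord1 !mxE /app nth_mkseq // eqxx andbT.
congr (_ - _).
case: (i =P k) => [->|ne].
  rewrite mul1r ifT // /dotN sumfE; apply: eq_bigr => b _.
  by rewrite !mxE /cartanN.
rewrite mul0r ifF //; apply/eqP => E; apply: ne; exact: val_inj.
Qed.

Lemma cartan_sym t : (cartan t)^T = cartan t.
Proof.
apply/matrixP=> a b; rewrite !mxE eq_sym /adjacent; congr (if _ then _ else _).
by rewrite orbC.
Qed.

Lemma aCa t (k : 'I_(rank t)) :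
  (simple_root k)^T *m cartan t *m simple_root k = 2%:M.
Proof.
rewrite /simple_root trmx_delta -rowE -colE.
apply/matrixP=> i j; rewrite (ord1 i) (ord1 j) !mxE /=.
by rewrite eqxx.
Qed.

Lemma sref_sq t (k : 'I_(rank t)) : sref k *m sref k = 1%:M.
Proof.
rewrite /sref /refl; set a := simple_root k; set C := cartan t.
rewrite mulmxBl mul1mx mulmxBr mulmx1.
have -> : a *m (a^T *m C) *m (a *m (a^T *m C)) = 2%:Z *: (a *m (a^T *m C)).
  have -> : a *m (a^T *m C) *m (a *m (a^T *m C)) = a *m ((a^T *m C *m a) *m (a^T *m C)).
    by rewrite !mulmxA.
  by rewrite aCa mul_scalar_mx !scalemxAr.
set P := a *m (a^T *m C).
rewrite (_ : 2%Z = 1 + 1) // scalerDl scale1r.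
have -> : P - (P + P) = - P by rewrite opprD addrA subrr sub0r.
by rewrite opprK subrK.
Qed.

Lemma srefTC t (k : 'I_(rank t)) : (sref k)^T *m cartan t = cartan t *m sref k.
Proof.
rewrite /sref /refl; set a := simple_root k; set C := cartan t.
rewrite linearB /= trmx1 mulmxBl mul1mx mulmxBr mulmx1 !trmx_mul trmxK.
by rewrite /C cartan_sym -!mulmxA.
Qed.

Lemma refl_conj t (k : 'I_(rank t)) (b : 'cV[int]_(rank t)) :
  refl (sref k *m b) = sref k *m refl b *m sref k.
Proof.
have sq := sref_sq k; have TC := srefTC k.
move: (sref k) sq TC => s sq TC.
rewrite /refl trmx_mul -!mulmxA TC.
rewrite mulmxBl mul1mx mulmxBr sq.
by rewrite !mulmxA.
Qed.

Definition sr t (k : nat) : 'M[int]_(rank t) :=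
  if @insub _ (fun m => (m < rank t)%N) 'I_(rank t) k is Some o then sref o else 1%:M.
Definition wm t (ws : seq nat) : 'M[int]_(rank t) := foldr (fun k m => sr t k *m m) 1%:M ws.

Lemma sr_sref t k (H : (k < rank t)%N) : sr t k = sref (Ordinal H).
Proof.
rewrite /sr insubT //= => H'; congr sref; exact: val_inj.
Qed.

Lemma wm_app t ws s : all (fun m => (m < rank t)%N) ws ->
  wm t ws *m vec (rank t) s = vec (rank t) (appw t ws s).
Proof.
elim: ws => [|k ws IH] /=; first by rewrite mul1mx.
case/andP=> Hk Hws; rewrite -mulmxA IH // (sr_sref Hk) app_ok //.
Qed.

Lemma wm_cat t xs ys : wm t (xs ++ ys) = wm t xs *m wm t ys.
Proof. by elim: xs => [|k xs IH] /=; rewrite ?mul1mx // IH mulmxA. Qed.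

Lemma refl_wm t ws b : all (fun m => (m < rank t)%N) ws ->
  refl (wm t ws *m b) = wm t ws *m refl b *m wm t (rev ws).
Proof.
elim: ws => [|k ws IH] /=; first by rewrite !mul1mx mulmx1.
case/andP=> Hk Hws; rewrite -mulmxA (sr_sref Hk) refl_conj IH //.
rewrite rev_cons -cats1 wm_cat /= mulmx1 (sr_sref Hk) !mulmxA //.
Qed.

Lemma gen_mulc t P (g h : 'M[int]_(rank t)) : gen_by P g -> gen_by P h -> gen_by P (g *m h).
Proof.
elim=> [|j g' Pj _ IH] Hh; first by rewrite mul1mx.
rewrite -mulmxA; apply: gen_mul => //; exact: IH.
Qed.

Lemma special_val t : nat_of_ord (special_index t) = inat t.
Proof. by case: t. Qed.

Lemma gen_wm t ws : all (fun m => (m < rank t)%N && (m != inat t)) ws ->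
  Wi (wm t ws).
Proof.
rewrite /Wi; elim: ws => [|k ws IH] /=; first by move=> _; exact: gen_one.
case/andP=> /andP [Hk Hi] Hws; rewrite (sr_sref Hk); apply: gen_mul; last exact: IH.
by apply/negP => /eqP /(congr1 val) /=; rewrite special_val; apply/eqP.
Qed.

Lemma all_lt t ws : all (fun m => (m < rank t)%N && (m != inat t)) ws ->
  all (fun m => (m < rank t)%N) ws.
Proof. by elim: ws => //= k ws IH /andP [/andP [-> _] /IH]. Qed.

Lemma vec_unit t (j : 'I_(rank t)) : simple_root j = vec (rank t) (unitv (rank t) j).
Proof.
apply/matrixP=> i z; rewrite (ord1 z) !mxE /unitv nth_mkseq // andbT.
case: (i =P j) => [->|ne]; first by rewrite eqxx.
by rewrite (_ : (i == j :> nat) = false) //; apply/negbTE/eqP=> E; apply: ne; exact: val_inj.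
Qed.

Lemma refl_sgn t sg s : refl (vec (rank t) (sgn sg s)) = refl (vec (rank t) s).
Proof.
case: sg => //=.
have -> : vec (rank t) [seq - x | x <- s] = - vec (rank t) s.
  apply/matrixP=> i z; rewrite !mxE.
  case: (ltnP i (size s)) => Hi; first by rewrite (nth_map 0).
  by rewrite !nth_default ?size_map // oppr0.
by rewrite /refl linearN /= mulNmx mulNmx mulmxN opprK.
Qed.

Lemma weyl_closed t (Lv : seq (seq int)) :
  all (fun v => all (fun k => app t k v \in Lv) (iota 0 (rank t))) Lv ->
  forall w, weyl w -> forall v, v \in Lv ->
  exists2 v', v' \in Lv & w *m vec (rank t) v = vec (rank t) v'.
Proof.
move=> Hcl w; elim=> [|j g _ _ IH] v Hv; first by exists v => //; rewrite mul1mx.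
have [v' Hv' E] := IH v Hv.
exists (app t j v'); last by rewrite -mulmxA E app_ok.
have /allP /(_ j) := allP Hcl v' Hv'; apply; by rewrite mem_iota /=.
Qed.

Lemma main_gen t cert (a : 'cV[int]_(rank t)) : good t cert -> is_root a ->
  Wi (refl a) \/
  exists u v, Wi u /\ Wi v /\ refl a = u *m sref (special_index t) *m v.
Proof.
case/and3P=> Hc Hcl Hu [w [j [Hw ->]]].
rewrite vec_unit.
have Hj : unitv (rank t) j \in map fst cert.
  by apply: (allP Hu); rewrite mem_iota /=.
have [v' Hv' ->] := weyl_closed Hcl Hw Hj.
case/mapP: Hv' => [[v'' [[sg k] ws]]] He /= ->.
have /= /and3P [Hk Hws /eqP ->] := allP Hc _ He.
have Hws' := all_lt Hws.
rewrite refl_sgn -wm_app //.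
have -> : unitv (rank t) k = unitv (rank t) (Ordinal Hk) by [].
rewrite -vec_unit refl_wm // -/(sref _).
have Hu1 := gen_wm Hws.
have Hu2 : Wi (wm t (rev ws)) by apply: gen_wm; rewrite all_rev.
case: (eqVneq k (inat t)) => [Ek|Nk].
  right; exists (wm t ws), (wm t (rev ws)); split => //; split => //.
  congr (_ *m sref _ *m _); apply: val_inj; by rewrite /= special_val.
left; apply: gen_mulc => //; apply: gen_mulc => //.
rewrite -[sref _]mulmx1; apply: gen_mul; last exact: gen_one.
apply/negP => /eqP /(congr1 val) /=; rewrite special_val; exact/eqP.
Qed.

Lemma good6 : good E6 cert6. Proof. vm_compute. reflexivity. Qed.
Lemma good7 : good E7 cert7. Proof. vm_compute. reflexivity. Qed.

Theorem lemma2p4 (t : Etype) (a : 'cV[int]_(rank t)) :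
  is_root a ->
  Wi (refl a) \/
  exists u v, Wi u /\ Wi v /\ refl a = u *m sref (special_index t) *m v.
Proof.
case: t a => a.
- exact: (main_gen good6).
- exact: (main_gen good7).
Qed.
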